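(* There is a function $\widehat g(n)=\Theta(\log^2 n)$ such that for all $n$, all distinct $i,j\in[n]$, every real $\delta\ge0$ and every integer $0\le t\le n\log n$, $$\sum_{m=2}^{n-1}\mathcal{P}^{n,t}_{1,m}\big([n]\times\overline{j\pm\delta}\big)\le 2\delta+\widehat g(n),$$ where $\widehat g$ does not depend on $i,j,\delta,t$.
   Context: The random-to-random insertions shuffle on a deck of $n$ cards numbered $1,\dots,n$: at each step a card is chosen uniformly at random, removed, and reinserted at a uniformly random position. Orderings are identified with $\sigma\in S_n$, $\sigma(k)$ being the position of card $k$; $\Pi_t$ is the induced random walk on $S_n$ and $\mathbb{P}^n_\sigma$ its law started at $\sigma$. $A^t$ is the (random) set of cards not chosen for removal in the first $t$ shuffles. For $k$ and $M\ge0$, $\overline{k\pm M}=[n]\cap[k-M,k+M]$. For distinct $i,j\in[n]$, $m_1\in[n-1]$, $m_2\in[n]$ and integer $t\ge0$, let $\sigma\in S_n$ be any permutation with $\sigma(j)=m_2$ and $\sigma(i)=m_1+1$ if $m_2\le m_1$, $\sigma(i)=m_1$ if $m_2>m_1$, and define the probability measure on $[n]\times[n]$ $$\mathcal{P}^{n,t}_{m_1,m_2}(\cdot)=\mathbb{P}^n_\sigma\big((\Pi_t(i),\Pi_t(j))\in\cdot\,\big|\,i,j\in A^t\big).$$ $\log$ is the natural logarithm. *)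

(* Defs.v *)
From mathcomp Require Import all_boot.
From mathcomp Require Import perm.
From Stdlib Require Import Reals.

Set Implicit Arguments.
Unset Strict Implicit.
Unset Printing Implicit Defensive.

(* Conventions: cards are 'I_n (ordinal k stands for card k+1), positions are
   stored 0-indexed as nats (value x stands for position x+1).  A configuration
   is the map card |-> position.  One shuffle step is driven by a pair
   (c, p) : 'I_n * 'I_n : card c is removed and reinserted so that it ends at
   position p; the pair is uniform over 'I_n * 'I_n. *)

Definition rtr_step n (pos : 'I_n -> nat) (cp : 'I_n * 'I_n) : 'I_n -> nat :=
  fun k =>
    let c := cp.1 in
    let p := nat_of_ord cp.2 in
    let a := pos c in
    let x := pos k in
    if k == c then p
    else if (a < x) && (x <= p) then x.-1
    else if (p <= x) && (x < a) then x.+1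
    else x.

Definition rtr_run n (sigma : {perm 'I_n}) (w : seq ('I_n * 'I_n)) : 'I_n -> nat :=
  foldl (@rtr_step n) (fun k => nat_of_ord (sigma k)) w.

Definition avoids n (i j : 'I_n) (w : seq ('I_n * 'I_n)) : bool :=
  all (fun cp => (cp.1 != i) && (cp.1 != j)) w.

(* P^n_sigma((Pi_t(i), Pi_t(j)) \in S | i, j \in A^t), positions 1-indexed in S.
   The t shuffle choices are i.i.d. uniform on 'I_n * 'I_n, so the law of the
   choice sequence is uniform on t.-tuples; the conditional probability is a
   ratio of counts. *)
Definition Pcond n t (sigma : {perm 'I_n}) (i j : 'I_n) (S : pred (nat * nat)) : R :=
  (INR #|[set w : t.-tuple ('I_n * 'I_n) |
            avoids i j w &&
            S ((rtr_run sigma w i).+1, (rtr_run sigma w j).+1)]|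
   / INR #|[set w : t.-tuple ('I_n * 'I_n) | avoids i j w]|)%R.

Definition start_ok n (i j : 'I_n) (m1 m2 : nat) (sigma : {perm 'I_n}) : Prop :=
  (nat_of_ord (sigma j)).+1 = m2 /\
  (nat_of_ord (sigma i)).+1 = (if m2 <= m1 then m1.+1 else m1).

Definition window (n k : nat) (M : R) : pred nat :=
  fun x => (1 <= x <= n) &&
           (if Rle_dec (Rabs (INR x - INR k)) M then true else false).

Definition ev_window (n jl : nat) (M : R) : pred (nat * nat) :=
  fun ab => (1 <= ab.1 <= n) && window n jl M ab.2.

(* Main.v *)
Require Import Defs.
From mathcomp Require Import all_boot.
From mathcomp Require Import perm.
From Stdlib Require Import Reals.
From mathcomp Require Import zify.
From Stdlib Require Import Lra Lia.
Set Implicit Arguments. Unset Strict Implicit. Unset Printing Implicit Defensive.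

Definition avx n (i j : 'I_n) (x : 'I_n * 'I_n) : bool := (x.1 != i) && (x.1 != j).

Definition Gc n (i j : 'I_n) t (pos : 'I_n -> nat) (Q : ('I_n -> nat) -> bool) : nat :=
  #|[set w : t.-tuple ('I_n * 'I_n) | avoids i j w && Q (foldl (@rtr_step n) pos w)]|.



Lemma Gc_sum n (i j : 'I_n) t pos Q :
  Gc i j t pos Q = \sum_(w : t.-tuple ('I_n * 'I_n)) (avoids i j w && Q (foldl (@rtr_step n) pos w) : nat).
Proof. by rewrite /Gc -sum1dep_card big_mkcond. Qed.

Lemma Gc0 n (i j : 'I_n) pos Q : Gc i j 0 pos Q = Q pos.
Proof.
rewrite Gc_sum (big_pred1 [tuple]) /=.
  by case: (Q pos).
by move=> w; apply/esym/eqP; apply: val_inj; case: w => [[]].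
Qed.

Lemma GcS n (i j : 'I_n) t pos Q :
  Gc i j t.+1 pos Q = \sum_(x | avx i j x) Gc i j t (rtr_step pos x) Q.
Proof.
rewrite Gc_sum.
rewrite (reindex (fun p : ('I_n * 'I_n) * t.-tuple ('I_n * 'I_n) => [tuple of p.1 :: p.2])) /=.
  rewrite -(pair_big xpredT xpredT (fun (x : 'I_n * 'I_n) (w : t.-tuple ('I_n * 'I_n)) => (avoids i j [tuple of x :: w] && Q (foldl (@rtr_step n) pos [tuple of x :: w]) : nat))) /= [RHS]big_mkcond /=. apply: eq_bigr => x _.
  rewrite Gc_sum /avx; case: ifP => hx.
    by apply: eq_bigr.
  by rewrite big1.
exists (fun w : t.+1.-tuple _ => (thead w, [tuple of behead w])).
  by move=> [x w] _ /=; rewrite theadE; congr pair; apply: val_inj.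
by move=> w _ /=; rewrite [RHS]tuple_eta.
Qed.

Definition shiftf (a p z : nat) : nat :=
  if (a < z) && (z <= p) then z.-1 else if (p <= z) && (z < a) then z.+1 else z.

Lemma shift_inj a p y z : y <> a -> z <> a -> shiftf a p y = shiftf a p z -> y = z.
Proof. rewrite /shiftf; repeat case: ifP => ?; lia. Qed.
Lemma shift_ne a p z : z <> a -> shiftf a p z <> p.
Proof. rewrite /shiftf; repeat case: ifP => ?; lia. Qed.
Lemma shift_lt a p y z : y <> a -> z <> a -> y < z -> shiftf a p y < shiftf a p z.
Proof. rewrite /shiftf; repeat case: ifP => ?; lia. Qed.
Lemma shift_bound a p z n : a < n -> p < n -> z < n -> shiftf a p z < n.
Proof. rewrite /shiftf; repeat case: ifP => ?; lia. Qed.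

Lemma step_val n (pos : 'I_n -> nat) x k : k != x.1 ->
  rtr_step pos x k = shiftf (pos x.1) x.2 (pos k).
Proof. by move=> hk; rewrite /rtr_step (negbTE hk). Qed.

Lemma step_c n (pos : 'I_n -> nat) x : rtr_step pos x x.1 = x.2.
Proof. by rewrite /rtr_step eqxx. Qed.

Lemma step_lt n (pos : 'I_n -> nat) x k :
  (forall k, pos k < n) -> rtr_step pos x k < n.
Proof.
move=> H; case: (eqVneq k x.1) => [->|hk]; first by rewrite step_c.
by rewrite step_val //; apply: shift_bound.
Qed.

Lemma step_inj n (pos : 'I_n -> nat) x :
  injective pos -> injective (rtr_step pos x).
Proof.
move=> Hi k l.
have ne : forall u v : 'I_n, u != v -> pos u <> pos v.
  by move=> u v /eqP nuv E; apply: nuv; apply: Hi.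
case: (eqVneq k x.1) => [->|hk]; case: (eqVneq l x.1) => [->|hl] //.
- rewrite step_c step_val // => E; exfalso; exact: (shift_ne (ne _ _ hl) (esym E)).
- rewrite step_c step_val // => E; exfalso; exact: (shift_ne (ne _ _ hk) E).
- rewrite !step_val // => E; apply: Hi; exact: (shift_inj (ne _ _ hk) (ne _ _ hl) E).
Qed.

Lemma step_ord n (pos : 'I_n -> nat) x k l :
  injective pos -> k != x.1 -> l != x.1 ->
  pos k < pos l -> rtr_step pos x k < rtr_step pos x l.
Proof.
move=> Hi hk hl lt.
have ne : forall u v : 'I_n, u != v -> pos u <> pos v.
  by move=> u v /eqP nuv E; apply: nuv; apply: Hi.
rewrite !step_val //; exact: shift_lt (ne _ _ hk) (ne _ _ hl) lt.
Qed.

Lemma sum_ltn n z : \sum_(0 <= m < n) (m < z : nat) = minn z n.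
Proof.
elim: n => [|n IH]; first by rewrite big_nil; lia.
rewrite big_nat_recr //= IH; case: (ltnP n z) => h /=; lia.
Qed.

Lemma cnt_lt n (pos : 'I_n -> nat) (Hi : injective pos) (Hb : forall k, pos k < n) z :
  \sum_(c : 'I_n) (pos c < z : nat) = minn z n.
Proof.
pose f (c : 'I_n) : 'I_n := Ordinal (Hb c).
have fi : injective f by move=> u v /(congr1 val) /= /Hi.
rewrite -sum_ltn big_mkord [RHS](reindex_inj fi) /=.
by [].
Qed.

Lemma split2 n (i j : 'I_n) (F : 'I_n -> nat) : i != j ->
  \sum_(c : 'I_n) F c = F i + F j + \sum_(c | (c != i) && (c != j)) F c.
Proof.
move=> ij.
rewrite (bigD1 i) //= (bigD1 j) /=; last by rewrite eq_sym.
by rewrite addnA; congr (_ + _); apply: eq_bigl => c; rewrite andbC.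
Qed.

Lemma sum_avx n (i j : 'I_n) (F G : 'I_n -> nat) :
  \sum_(x | avx i j x) F x.1 * G x.2 =
  (\sum_(c | (c != i) && (c != j)) F c) * (\sum_(p : 'I_n) G p).
Proof.
rewrite big_distrl /=.
rewrite (eq_bigl (fun x : 'I_n * 'I_n => ((x.1 != i) && (x.1 != j)) && (fun _ _ => true) x.1 x.2)); last first.
  by move=> x; rewrite /avx andbT.
rewrite -(pair_big_dep (fun c : 'I_n => (c != i) && (c != j)) (fun _ _ => true) (fun c p => F c * G p)) /=.
by apply: eq_bigr => c _; rewrite big_distrr.
Qed.

Lemma sum_ord_lt n z : \sum_(p : 'I_n) (p < z : nat) = minn z n.
Proof. by rewrite -sum_ltn big_mkord. Qed.

Lemma sum_ord_ge n z : \sum_(p : 'I_n) (z <= p : nat) = n - minn z n.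
Proof.
rewrite -sum_ord_lt.
have : \sum_(p : 'I_n) ((z <= p : nat) + (p < z : nat)) = n.
  by rewrite (eq_bigr (fun _ => 1)) ?sum1_card ?card_ord // => p _; case: ltnP.
rewrite big_split /=; lia.
Qed.

Lemma shift_dn a p z : a <> z -> 0 < z -> (shiftf a p z == z.-1) = (a < z) && (z <= p).
Proof. move=> h1 h2; rewrite /shiftf; repeat case: ifP => ?; lia. Qed.
Lemma shift_up a p z : a <> z -> 0 < z -> (shiftf a p z == z.+1) = (p <= z) && (z < a).
Proof. move=> h1 h2; rewrite /shiftf; repeat case: ifP => ?; lia. Qed.
Lemma shift_st a p z : a <> z -> 0 < z ->
  (shiftf a p z == z.-1 : nat) + (shiftf a p z == z.+1 : nat) + (shiftf a p z == z : nat) = 1.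
Proof. move=> h1 h2; rewrite /shiftf; repeat case: ifP => ?; lia. Qed.

Lemma avx_ne n (i j : 'I_n) (pos : 'I_n -> nat) (Hi : injective pos) x :
  avx i j x -> x.1 != j /\ pos x.1 <> pos j.
Proof.
by case/andP=> _ h; split=> // E; move: h; rewrite (Hi _ _ E) eqxx.
Qed.

Lemma cnt_tot n (i j : 'I_n) : i != j ->
  \sum_(x | avx i j x) 1 = (n - 2) * n.
Proof.
move=> ij.
have := sum_avx i j (fun _ => 1) (fun _ => 1); rewrite /= => E.
rewrite (eq_bigr (fun x : 'I_n * 'I_n => 1 * 1)) // E.
rewrite !sum1_card card_ord; congr (_ * _).
have := split2 (fun _ => 1) ij; rewrite !sum1_card card_ord; lia.
Qed.

Lemma cnt_down n (i j : 'I_n) (pos : 'I_n -> nat) : i != j -> injective pos ->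
  (forall k, pos k < n) -> pos i < pos j ->
  \sum_(x | avx i j x) (rtr_step pos x j == (pos j).-1 : nat) = (pos j).-1 * (n - pos j).
Proof.
move=> ij Hi Hb Hij.
rewrite (eq_bigr (fun x : 'I_n * 'I_n => (pos x.1 < pos j : nat) * (pos j <= x.2 : nat))); last first.
  move=> x /(avx_ne Hi) [h1 h2]; rewrite step_val; last by rewrite eq_sym.
  rewrite shift_dn //; last by lia.
  by case: (_ < _); case: (_ <= _).
rewrite (sum_avx i j (fun c => (pos c < pos j : nat)) (fun p : 'I_n => (pos j <= p : nat))) sum_ord_ge.
have := split2 (fun c => (pos c < pos j : nat)) ij; rewrite cnt_lt //= Hij ltnn.
have := Hb j; set S := \sum_(c | _) _ => hj E.
have -> : S = (pos j).-1 by lia.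
congr (_ * _); lia.
Qed.

Lemma cnt_up n (i j : 'I_n) (pos : 'I_n -> nat) : i != j -> injective pos ->
  (forall k, pos k < n) -> pos i < pos j ->
  \sum_(x | avx i j x) (rtr_step pos x j == (pos j).+1 : nat) = (n - (pos j).+1) * (pos j).+1.
Proof.
move=> ij Hi Hb Hij.
rewrite (eq_bigr (fun x : 'I_n * 'I_n => (pos j < pos x.1 : nat) * (x.2 < (pos j).+1 : nat))); last first.
  move=> x /(avx_ne Hi) [h1 h2]; rewrite step_val; last by rewrite eq_sym.
  rewrite shift_up //; last by lia.
  by rewrite mulnC ltnS; case: (_ <= _); case: (_ < _).
rewrite (sum_avx i j (fun c => (pos j < pos c : nat)) (fun p : 'I_n => (p < (pos j).+1 : nat))) sum_ord_lt.
have := split2 (fun c => (pos j < pos c : nat)) ij; rewrite /= ltnn.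
have : \sum_(c : 'I_n) ((pos j < pos c : nat) + (pos c < (pos j).+1 : nat)) = n.
  by rewrite (eq_bigr (fun _ => 1)) ?sum1_card ?card_ord // => c _; rewrite ltnS; case: ltnP.
rewrite big_split /= cnt_lt //.
have := Hb j; have := Hb i.
set S := \sum_(c | _) _.
move=> hi hj E1 E2. set S2 := \sum_(c < n | _) _ in E2 *.
have hji : (pos j < pos i) = false by apply/negbTE; rewrite -leqNgt ltnW.
rewrite hji in E2.
have -> : S2 = n - (pos j).+1 by lia.
congr (_ * _); lia.
Qed.

Definition dn n z := z.-1 * (n - z).
Definition upc n z := (n - z.+1) * z.+1.
Definition stc n z := (n - 2) * n - dn n z - upc n z.

Fixpoint Hf (n : nat) (W : nat -> bool) (t z : nat) : nat :=
  match t with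
  | 0 => W z
  | t'.+1 => dn n z * Hf n W t' z.-1 + upc n z * Hf n W t' z.+1 + stc n z * Hf n W t' z
  end.

Lemma pick3 (F : nat -> nat) s z : 0 < z ->
  (s == z.-1 : nat) + (s == z.+1 : nat) + (s == z : nat) = 1 ->
  F s = (s == z.-1 : nat) * F z.-1 + (s == z.+1 : nat) * F z.+1 + (s == z : nat) * F z.
Proof.
move=> hz H.
have a1 : (z.-1 == z.+1) = false by apply/negbTE/eqP; lia.
have a2 : (z.-1 == z) = false by apply/negbTE/eqP; lia.
have a3 : (z.+1 == z) = false by apply/negbTE/eqP; lia.
have a4 : (z.+1 == z.-1) = false by apply/negbTE/eqP; lia.
have a5 : (z == z.-1) = false by apply/negbTE/eqP; lia.
have a6 : (z == z.+1) = false by apply/negbTE/eqP; lia.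
case: (eqVneq s z.-1) => [->|h1]; first by rewrite a1 a2 ?eqxx /= mul1n !mul0n !addn0.
case: (eqVneq s z.+1) => [->|h2]; first by rewrite a3 ?eqxx /= mul1n !mul0n add0n addn0.
case: (eqVneq s z) => [->|h3] /=; first by rewrite !mul0n mul1n.
by move: H; rewrite (negbTE h1) (negbTE h2) (negbTE h3).
Qed.

Lemma HB n (i j : 'I_n) (W : nat -> bool) t : i != j ->
  forall pos : 'I_n -> nat, injective pos -> (forall k, pos k < n) -> pos i < pos j ->
  Gc i j t pos (fun f => W (f j)) <= Hf n W t (pos j).
Proof.
move=> ij; elim: t => [|t IH] pos Hi Hb Hij.
  by rewrite Gc0.
rewrite GcS.
apply: (@leq_trans (\sum_(x | avx i j x) Hf n W t (rtr_step pos x j))).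
  apply: leq_sum => x hx; apply: IH.
  - exact: step_inj.
  - by move=> k; apply: step_lt.
  - by case/andP: hx => h1 h2; apply: step_ord; rewrite // eq_sym.
set z := pos j.
have hz : 0 < z by rewrite /z; lia.
have E : forall x, avx i j x -> Hf n W t (rtr_step pos x j) =
   (rtr_step pos x j == z.-1 : nat) * Hf n W t z.-1 + (rtr_step pos x j == z.+1 : nat) * Hf n W t z.+1
   + (rtr_step pos x j == z : nat) * Hf n W t z.
  move=> x /(avx_ne Hi) [h1 h2]; apply: pick3 => //.
  rewrite step_val; last by rewrite eq_sym.
  by apply: shift_st.
rewrite (eq_bigr _ E) !big_split /= -!big_distrl /=.
rewrite cnt_down // cnt_up //.
have T : \sum_(x | avx i j x) ((rtr_step pos x j == z.-1 : nat) + (rtr_step pos x j == z.+1 : nat) + (rtr_step pos x j == z : nat)) = (n - 2) * n.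
  rewrite -(cnt_tot ij); apply: eq_bigr => x /(avx_ne Hi) [h1 h2].
  rewrite step_val; last by rewrite eq_sym.
  by apply: shift_st.
rewrite !big_split /= cnt_down // cnt_up // in T.
rewrite /= /stc /dn /upc -/z.
set S := \sum_(x | _) _ in T *.
move: T; set A := z.-1 * (n - z); set B := (n - z.+1) * z.+1; set C := (n - 2) * n => T.
have -> : S = C - A - B by lia.
by [].
Qed.
Lemma colsum n z : 3 <= n -> 1 <= z < n ->
  dn n z.+1 + (1 < z) * upc n z.-1 + stc n z <= (n - 2) * n + 1.
Proof.
move=> hn /andP[h1 h2].
case: z h1 h2 => [//|z] _ h2.
have [k ek] : exists k, n = z + k.+2 by exists (n - z.+2); lia.
rewrite /stc /dn /upc /=.
have -> : n - z.+2 = k by lia.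
have -> : n - z.+1 = k.+1 by lia.
have -> : n - 2 = z + k by lia.
rewrite ek.
have hN : z * k.+1 + k * z.+2 <= (z + k) * (z + k.+2) by nia.
clear h2 ek.
case: z hN => [|z] hN /=.
  nia.
nia.
Qed.

Lemma HC n (W : nat -> bool) t : 3 <= n ->
  \sum_(1 <= z < n) Hf n W t z <= expn ((n - 2) * n).+1 t * \sum_(1 <= z < n) (W z : nat).
Proof.
move=> hn; elim: t => [|t IH]; first by rewrite expn0 mul1n.
have [m em] : exists m, n = m.+1 by exists n.-1; lia.
have hm : 1 <= m by lia.
rewrite /= !big_split /=.
have P1 : \sum_(1 <= z < n) dn n z * Hf n W t z.-1 = \sum_(1 <= z < n) dn n z.+1 * Hf n W t z.
  rewrite em big_nat_recl // big_nat_recr //= /dn /= mul0n add0n.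
  rewrite (_ : m.+1 - m.+1 = 0) ?muln0 ?mul0n ?addn0; last by lia.
  by [].
have P2 : \sum_(1 <= z < n) upc n z * Hf n W t z.+1 =
          \sum_(1 <= z < n) (1 < z) * upc n z.-1 * Hf n W t z.
  rewrite em [LHS]big_nat_recr // [RHS]big_nat_recl //= /upc /= !mul0n add0n.
  rewrite (_ : m.+1 - m.+1 = 0) ?mul0n ?addn0; last by lia.
  by apply: eq_big_nat => z /andP[hz _]; rewrite ltnS hz mul1n.
rewrite P1 P2 -!big_split /=.
apply: (@leq_trans (\sum_(1 <= z < n) ((n - 2) * n).+1 * Hf n W t z)).
  rewrite big_nat_cond [X in _ <= X]big_nat_cond; apply: leq_sum => z /andP[hz _].
  rewrite -!mulnDl; apply: leq_mul => //.
  have := colsum hn hz; lia.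
rewrite -big_distrr /= expnS -mulnA; apply: leq_mul => //.
Qed.

Definition numc n (i j : 'I_n) t (s : {perm 'I_n}) (delta : R) : nat :=
  #|[set w : t.-tuple ('I_n * 'I_n) | avoids i j w &&
     ev_window n (nat_of_ord j).+1 delta ((rtr_run s w i).+1, (rtr_run s w j).+1)]|.

Lemma main_count n (i j : 'I_n) (delta : R) t (sig : nat -> {perm 'I_n}) :
  3 <= n -> i != j ->
  (forall m : nat, (2 <= m < n)%N -> start_ok i j 1 m (sig m)) ->
  \sum_(2 <= m < n) numc i j t (sig m) delta <=
  expn ((n - 2) * n).+1 t * \sum_(1 <= z < n) (window n (nat_of_ord j).+1 delta z.+1 : nat).
Proof.
move=> hn ij Hs.
set Wp := fun z => window n (nat_of_ord j).+1 delta z.+1.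
apply: (@leq_trans (\sum_(1 <= z < n) Hf n Wp t z)); last exact: HC.
apply: (@leq_trans (\sum_(2 <= m < n) Hf n Wp t m.-1)).
  rewrite big_nat_cond [X in _ <= X]big_nat_cond; apply: leq_sum => m /andP[hm _].
  have [E1 E2] := Hs m hm.
  have hpos : injective (fun k => nat_of_ord (sig m k)).
    by move=> u v /val_inj /perm_inj.
  apply: (@leq_trans (Gc i j t (fun k => nat_of_ord (sig m k)) (fun f => Wp (f j)))).
    apply: subset_leq_card; apply/subsetP => w; rewrite !inE.
    by case/andP=> -> /andP[_ h].
  have -> : m.-1 = nat_of_ord (sig m j) by lia.
  apply: HB => //.
  move: E2; rewrite (_ : (m <= 1) = false) /=; lia.
rewrite big_add1 /=.
have [k ek] : exists k, n = k.+1 by exists n.-1; lia.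
rewrite ek /= big_nat_recr /=; last by lia.
apply: leq_addr.
Qed.

Lemma exp_le_compat (x y : R) : (x <= y)%R -> (exp x <= exp y)%R.
Proof. move=> h; case: (Rle_lt_or_eq_dec _ _ h) => [h'|->]; [left; exact: exp_increasing | lra]. Qed.

Lemma ln_le_compat (x y : R) : (0 < x)%R -> (x <= y)%R -> (ln x <= ln y)%R.
Proof. move=> h0 h; case: (Rle_lt_or_eq_dec _ _ h) => [h'|->]; [left; exact: ln_increasing | lra]. Qed.

Lemma exp_pow (x : R) (t : nat) : (exp x ^ t = exp (INR t * x))%R.
Proof.
elim: t => [|t IH]; first by rewrite /= Rmult_0_l exp_0.
rewrite S_INR -tech_pow_Rmult IH -exp_plus; congr exp; lra.
Qed.

Lemma one_plus_pow (x : R) (t : nat) : (0 <= x)%R -> ((1 + x) ^ t <= exp (INR t * x))%R.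
Proof.
move=> hx; rewrite -exp_pow; apply: pow_incr; split; first lra.
exact: exp_ineq1_le.
Qed.

Lemma two_pow (k : nat) : (2 <= k)%coq_nat -> (INR k + 2 <= 2 ^ k)%R.
Proof.
elim: k => [|k IH] h; first lia.
case: (Nat.eq_dec k 1) => [->|hk]; first by simpl; lra.
have h2 : (2 <= k)%coq_nat by lia.
have := IH h2; rewrite S_INR -tech_pow_Rmult; have := pos_INR k; lra.
Qed.

Lemma ln_le_nm2 (n : nat) : (4 <= n)%coq_nat -> (ln (INR n) <= INR n - 2)%R.
Proof.
move=> hn.
have e1 : (2 < exp 1)%R by have := exp_ineq1 1 ltac:(lra); lra.
have hk : (2 <= n - 2)%coq_nat by lia.
have := two_pow hk; rewrite minus_INR; last by lia.
move=> h2.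
have h3 : (2 ^ (n - 2) <= exp 1 ^ (n - 2))%R by apply: pow_incr; lra.
rewrite exp_pow Rmult_1_r minus_INR in h3; last by lia.
have hn0 : (0 < INR n)%R by apply: lt_0_INR; lia.
rewrite -[X in (_ <= X)%R]ln_exp; apply: ln_le_compat => //.
have e2 : INR 2 = 2%R by rewrite /= ; lra.
rewrite e2 in h2 h3. set A := (2 ^ (n - 2))%R in h2 h3. lra.
Qed.

Definition gfun (n : nat) : R :=
  if (3 <= n)%N then (ln (INR n) ^ 2 + 1 + INR n * (exp (ln (INR n) / (INR n - 2)) - 1))%R else 0%R.

Lemma gfun_bounds (n : nat) : (4 <= n)%N ->
  (1 * ln (INR n) ^ 2 <= gfun n <= 8 * ln (INR n) ^ 2)%R.
Proof.
move=> hn; have hn' : (4 <= n)%coq_nat by apply/leP.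
rewrite /gfun (_ : (3 <= n)%N = true); last by apply/leP; lia.
have hn4 : (4 <= INR n)%R by have := le_INR 4 n hn'; rewrite /=; lra.
have hn0 : (0 < INR n)%R by lra.
have hl1 : (1 <= ln (INR n))%R.
  rewrite -[X in (X <= _)%R](ln_exp 1); apply: ln_le_compat; first exact: exp_pos.
  have := exp_le_3; lra.
have hl : (ln (INR n) <= INR n - 2)%R by exact: ln_le_nm2.
set L := ln (INR n) in hl1 hl *.
set y := (L / (INR n - 2))%R.
have hyd : (y * (INR n - 2) = L)%R by rewrite /y; field; lra.
have hy0 : (0 <= y)%R by nra.
have hy1 : (y <= 1)%R by nra.
have hE1 : (1 <= exp y)%R by rewrite -exp_0; apply: exp_le_compat.
have hE3 : (exp y <= 3)%R by have := exp_le_3; have := exp_le_compat hy1; lra.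
have hEy : (exp y - 1 <= y * exp y)%R.
  have := exp_ineq1_le (- y); have := exp_plus y (- y).
  rewrite Rplus_opp_r exp_0 => H1 H2; nra.
have hny : (INR n * y <= 2 * L)%R.
  have : ((2 * L - INR n * y) * (INR n - 2) = L * (INR n - 4))%R by rewrite -hyd; ring.
  nra.
split; first nra.
have h1 : (INR n * (exp y - 1) <= 6 * L)%R by nra.
simpl; nra.
Qed.

Lemma INR_expn a t : INR (expn a t) = (INR a ^ t)%R.
Proof. elim: t => [|t IH]; first by rewrite expn0. by rewrite expnS mult_INR IH. Qed.

Lemma Gc_true n (i j : 'I_n) t : forall p1 p2, Gc i j t p1 (fun _ => true) = Gc i j t p2 (fun _ => true).
Proof.
elim: t => [|t IH] p1 p2; first by rewrite !Gc0.
by rewrite !GcS; apply: eq_bigr => y _; apply: IH.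
Qed.

Lemma den n (i j : 'I_n) t : i != j ->
  #|[set w : t.-tuple ('I_n * 'I_n) | avoids i j w]| = expn ((n - 2) * n) t.
Proof.
move=> ij.
have -> : #|[set w : t.-tuple ('I_n * 'I_n) | avoids i j w]| = Gc i j t (fun _ => 0) (fun _ => true).
  by apply: eq_card => w; rewrite !inE andbT.
elim: t => [|t IH]; first by rewrite Gc0.
rewrite GcS (eq_bigr (fun _ => expn ((n - 2) * n) t)); last first.
  by move=> x _; rewrite (@Gc_true n i j t _ (fun _ => 0)).
by rewrite expnS -(cnt_tot ij) big_distrl /=; apply: eq_bigr => x _; rewrite mul1n.
Qed.

Lemma sumR_div (F : nat -> nat) a b (D : R) :
  \big[Rplus/0%R]_(a <= m < b) (INR (F m) / D)%R = (INR (\sum_(a <= m < b) F m) / D)%R.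
Proof.
apply: (big_rec2 (fun y1 y2 => y1 = INR y2 / D)%R).
  by rewrite /= /Rdiv Rmult_0_l.
by move=> m y1 y2 _ ->; rewrite plus_INR /Rdiv; ring.
Qed.

Ltac rdec := repeat match goal with
  | |- context [Rle_dec ?x ?y] => destruct (Rle_dec x y)
  | H : context [Rle_dec ?x ?y] |- _ => destruct (Rle_dec x y)
  end.

Lemma win_cnt (c d : R) a k : (0 <= d)%R ->
  (INR (\sum_(a <= z < a + k) (if Rle_dec (Rabs (INR z.+1 - c)) d then 1 else 0))
     <= Rmax 0 (Rmin (INR (a + k)) (c + d) - (c - d) + 1))%R.
Proof.
move=> hd; elim: k => [|k IH].
  rewrite addn0 big_geq //=; apply: Rmax_l.
set F := fun z : nat => (if Rle_dec (Rabs (INR z.+1 - c)) d then 1 else 0)%N.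
have E : \sum_(a <= z < (a + k).+1) F z = \sum_(a <= z < a + k) F z + F (a + k).
  by rewrite big_nat_recr //; apply: leq_addr.
rewrite addnS E plus_INR /F !S_INR.
move: IH; set S := INR (\sum_(a <= z < a + k) _) => IH.
case: Rle_dec => h.
  change (INR (if is_left (left h) then 1%N else 0%N)) with 1%R.
  have hb : (c - d <= INR (a + k) + 1 <= c + d)%R.
    by move: h; rewrite /Rabs; case: Rcase_abs => ?; lra.
  move: IH; rewrite /Rmax /Rmin => IH; rdec; lra.
change (INR (if is_left (right h) then 1%N else 0%N)) with 0%R.
move: IH; rewrite /Rmax /Rmin => IH; rdec; lra.
Qed.

Lemma K_bounds n (j : 'I_n) (delta : R) : (0 <= delta)%R ->
  let K := \sum_(1 <= z < n) (window n (nat_of_ord j).+1 delta z.+1 : nat) in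
  (INR K <= 2 * delta + 1)%R /\ (INR K <= INR n)%R.
Proof.
move=> hd K; split.
  set c := INR (nat_of_ord j).+1.
  have h1 : K <= \sum_(1 <= z < 1 + n.-1) (if Rle_dec (Rabs (INR z.+1 - c)) delta then 1 else 0).
    rewrite /K; case: (leqP n 1) => hn.
      by rewrite big_geq.
    rewrite (_ : 1 + n.-1 = n); last by lia.
    apply: leq_sum => z _; rewrite /window /c; case: Rle_dec => _ /=.
      by rewrite andbT leq_b1.
    by rewrite andbF.
  eapply Rle_trans; first by apply: le_INR; apply/leP; exact: h1.
  eapply Rle_trans; first exact: win_cnt.
  rewrite /Rmax /Rmin; rdec; lra.
apply: le_INR; apply/leP.
apply: (@leq_trans (\sum_(1 <= z < n) 1)).
  by apply: leq_sum => z _; case: (window _ _ _ _).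
rewrite sum_nat_const_nat; lia.
Qed.

Theorem corollary1 :
  exists g : nat -> R,
    (exists (c1 c2 : R) (N : nat),
        (0 < c1)%R /\ (0 < c2)%R /\
        forall n : nat, (N <= n)%N ->
          (c1 * (ln (INR n)) ^ 2 <= g n <= c2 * (ln (INR n)) ^ 2)%R) /\
    forall (n : nat) (i j : 'I_n) (delta : R) (t : nat)
           (sig : nat -> {perm 'I_n}),
      i != j ->
      (0 <= delta)%R ->
      (INR t <= INR n * ln (INR n))%R ->
      (forall m : nat, (2 <= m < n)%N -> start_ok i j 1 m (sig m)) ->
      (\big[Rplus/0%R]_(2 <= m < n)
          Pcond t (sig m) i j (ev_window n (nat_of_ord j).+1 delta)
        <= 2 * delta + g n)%R.
Proof.
exists gfun; split.
  exists 1%R, 8%R, 4; split; first lra; split; first lra.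
  by move=> n hn; apply: gfun_bounds.
move=> n i j delta t sig ij hd ht Hs.
case: (ltnP n 3) => hn.
  rewrite big_geq; last by lia.
  rewrite /gfun (_ : (3 <= n) = false); last by lia.
  lra.
set N := (n - 2) * n.
have hPc : forall m, Pcond t (sig m) i j (ev_window n (nat_of_ord j).+1 delta) =
    (INR (numc i j t (sig m) delta) / INR (expn N t))%R.
  by move=> m; rewrite /Pcond den.
rewrite (eq_bigr _ (fun m _ => hPc m)) sumR_div.
have hmc := @main_count n i j delta t sig hn ij Hs.
set K := \sum_(1 <= z < n) _ in hmc.
have [hK1 hK2] := K_bounds j hd.
rewrite -/K in hK1 hK2.
set S := \sum_(2 <= m < n) _ in hmc *.
have hN0 : (0 < INR N)%R.
  rewrite /N mult_INR minus_INR; last by lia.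
  have : (3 <= INR n)%R by have := le_INR 3 n ltac:(lia); rewrite /=; lra.
  rewrite /=; nra.
have hNe : INR N = ((INR n - 2) * INR n)%R.
  rewrite /N mult_INR minus_INR; last by lia.
  by rewrite /=; ring.
set q := (1 + / INR N)%R.
have hS : (INR S / INR (expn N t) <= INR K * q ^ t)%R.
  have hD : (0 < INR (expn N t))%R by rewrite INR_expn; apply: pow_lt.
  have hle : (INR S <= INR (expn N.+1 t) * INR K)%R by rewrite -mult_INR; apply: le_INR; apply/leP.
  have eq : INR (expn N.+1 t) = (INR (expn N t) * q ^ t)%R.
    rewrite !INR_expn -Rpow_mult_distr; apply: (f_equal (fun x => x ^ t)%R).
    rewrite S_INR /q; field; lra.
  rewrite eq in hle.
  rewrite /Rdiv; apply: (Rmult_le_reg_r (INR (expn N t))) => //.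
  rewrite Rmult_assoc Rinv_l; last by lra.
  have := pow_le q t ltac:(rewrite /q; have := Rinv_0_lt_compat _ hN0; lra).
  have := pos_INR K; nra.
set L := ln (INR n).
set E := exp (L / (INR n - 2)).
have hq : (q ^ t <= E)%R.
  eapply Rle_trans; first apply: one_plus_pow.
    by have := Rinv_0_lt_compat _ hN0; lra.
  apply: exp_le_compat.
  have hiN := Rinv_0_lt_compat _ hN0.
  apply: (Rle_trans _ (INR n * L * / INR N)%R).
    by apply: Rmult_le_compat_r; [lra | rewrite /L; exact: ht].
  rewrite hNe; apply: Req_le; rewrite /Rdiv; field.
  have : (3 <= INR n)%R by have := le_INR 3 n ltac:(lia); rewrite /=; lra.
  lra.
have hE1 : (1 <= E)%R.
  rewrite /E -exp_0; apply: exp_le_compat.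
  have h3 : (3 <= INR n)%R by have := le_INR 3 n ltac:(lia); rewrite /=; lra.
  have hL : (0 <= L)%R.
    rewrite /L -ln_1; apply: ln_le_compat; lra.
  rewrite /Rdiv; apply: Rmult_le_pos => //.
  by have := Rinv_0_lt_compat (INR n - 2) ltac:(lra); lra.
rewrite /gfun (_ : (3 <= n) = true); last by lia.
rewrite -/L -/E.
have hK0 := pos_INR K.
have hq0 : (0 <= q ^ t)%R by apply: pow_le; rewrite /q; have := Rinv_0_lt_compat _ hN0; lra.
have : (INR K * q ^ t <= INR K * E)%R by apply: Rmult_le_compat_l.
have := pow2_ge_0 L.
simpl; nra.
Qed.
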